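(* For every odd integer $m\geq 3$, the edge set of $C_m[4]$ cannot be partitioned into one $C_4$-factor and three $C_m$-factors.
   Context: For a graph $G$ and a positive integer $k$, $G[k]$ is the graph with vertex set $V(G)\times\{0,1,\dots,k-1\}$ in which $(u,i)$ and $(w,j)$ are adjacent if and only if $uw\in E(G)$. $C_m$ is the cycle of length $m$. A $C_k$-factor of a graph is a spanning subgraph each of whose components is a cycle of length $k$. *)

(* Defs.v *)
From mathcomp Require Import all_boot.
Set Implicit Arguments. Unset Strict Implicit. Unset Printing Implicit Defensive.

Definition cyc_adj (n : nat) : rel 'I_n :=
  fun i j => (val j == (val i).+1 %% n) || (val i == (val j).+1 %% n).

Definition Cm (m : nat) : rel 'I_m := @cyc_adj m.

Definition blowup (T : finType) (G : rel T) (k : nat) : rel (T * 'I_k) :=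
  fun x y => G x.1 y.1.

(* F (a spanning subgraph of G, given by its edge relation) is a C_k-factor of G:
   F uses only edges of G, and the connected component (in F) of every vertex v
   is a cycle of length k, i.e. is the image of an injective c : 'I_k -> V with
   F (c i) (c j) exactly when i j are adjacent in C_k. *)
Definition is_Ck_factor (V : finType) (G F : rel V) (k : nat) : Prop :=
  subrel F G /\
  forall v : V, exists c : 'I_k -> V,
    [/\ injective c,
        (forall w, connect F v w = (w \in codom c)) &
        (forall i j, F (c i) (c j) = @cyc_adj k i j)].

Definition edge_partition4 (V : finType) (G F0 F1 F2 F3 : rel V) : Prop :=
  forall x y, G x y ->
    (F0 x y || F1 x y || F2 x y || F3 x y) /\
    ~~ (F0 x y && F1 x y) /\ ~~ (F0 x y && F2 x y) /\ ~~ (F0 x y && F3 x y) /\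
    ~~ (F1 x y && F2 x y) /\ ~~ (F1 x y && F3 x y) /\ ~~ (F2 x y && F3 x y).

(* Main.v *)
Require Import Defs.
From mathcomp Require Import all_boot zify.
Set Implicit Arguments. Unset Strict Implicit.

Definition up (m : nat) (x y : 'I_m * 'I_4) : bool := val y.1 == (val x.1).+1 %% m.

Lemma G_up m (x y : 'I_m * 'I_4) : @blowup _ (@Cm m) 4 x y = up x y || up y x.
Proof. by []. Qed.

Fixpoint qd m (x : nat -> 'I_m * 'I_4) j :=
  if j is j'.+1 then qd x j' + up (x j'.+1) (x j') else 0.

Lemma qd_inv m (x : nat -> 'I_m * 'I_4) :
  (forall j, up (x j) (x j.+1) || up (x j.+1) (x j)) ->
  forall j, val (x j).1 + 2 * qd x j = val (x 0).1 + j %[mod m].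
Proof.
move=> H; elim=> [|j IH] /=; first by rewrite muln0 !addn0.
case D: (up (x j.+1) (x j)).
- move/eqP: D => D.
  have -> : val (x j.+1).1 + 2 * (qd x j + true) = ((val (x j.+1).1).+1 + 2 * qd x j) + 1 by simpl; lia.
  rewrite (_ : val (x 0).1 + j.+1 = (val (x 0).1 + j) + 1); last by lia.
  apply/eqP; rewrite eqn_modDr; apply/eqP.
  by rewrite -modnDml -D.
- have U : up (x j) (x j.+1) by move: (H j); rewrite D orbF.
  move/eqP: U => U.
  rewrite addn0 U modnDml (_ : val (x 0).1 + j.+1 = (val (x 0).1 + j) + 1); last by lia.
  apply/eqP.
  have -> : (val (x j).1).+1 + 2 * qd x j = (val (x j).1 + 2 * qd x j) + 1 by lia.
  by rewrite eqn_modDr; apply/eqP.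
Qed.

Lemma qd_le m (x : nat -> 'I_m * 'I_4) j : qd x j <= j.
Proof. elim: j => //= j IH; case: (up _ _) => /=; lia. Qed.

Lemma qd_zero m (x : nat -> 'I_m * 'I_4) j : qd x j = 0 -> forall i, i < j -> up (x i.+1) (x i) = false.
Proof.
elim: j => //= j IH E i; rewrite ltnS leq_eqVlt => /orP [/eqP ->|Hi].
- by case: (up _ _) E => //=; lia.
- apply: IH Hi; move: E; case: (up _ _) => /=; lia.
Qed.

Lemma qd_full m (x : nat -> 'I_m * 'I_4) j : qd x j = j -> forall i, i < j -> up (x i.+1) (x i) = true.
Proof.
elim: j => //= j IH E i; have Hl := qd_le x j; rewrite ltnS leq_eqVlt => /orP [/eqP ->|Hi].
- by case: (up _ _) E => //=; lia.
- apply: IH Hi; move: E; case: (up _ _) => /=; lia.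
Qed.

Definition xs m k (hk : 0 < k) (c : 'I_k -> 'I_m * 'I_4) j := c (Ordinal (ltn_pmod j hk)).

Section X.
Variables (m k : nat) (hk : 0 < k) (c : 'I_k -> 'I_m * 'I_4) (F : rel ('I_m * 'I_4)).
Hypothesis HF : forall i j, F (c i) (c j) = cyc_adj i j.

Lemma xs_mod j : xs hk c (j %% k) = xs hk c j.
Proof. by rewrite /xs; congr c; apply: val_inj; rewrite /= modn_mod. Qed.

Lemma xs_ord (i : 'I_k) : xs hk c i = c i.
Proof. by rewrite /xs; congr c; apply: val_inj; rewrite /= modn_small. Qed.

Lemma xs_succ j : xs hk c (j %% k).+1 = xs hk c j.+1.
Proof. rewrite /xs; congr c; apply: val_inj; change ((j %% k).+1 %% k = j.+1 %% k); by rewrite -(addn1 j) -(addn1 (j %% k)) modnDml. Qed.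

Lemma xs_add j : xs hk c (j + k) = xs hk c j.
Proof. by rewrite -(xs_mod (j + k)) modnDr xs_mod. Qed.

Lemma xs_step j : F (xs hk c j) (xs hk c j.+1).
Proof. rewrite /xs HF /cyc_adj; apply/orP; left; change (j.+1 %% k == (j %% k).+1 %% k); by rewrite -(addn1 j) -(addn1 (j %% k)) modnDml. Qed.

Lemma xs_sym a b : F (xs hk c a) (xs hk c b) = F (xs hk c b) (xs hk c a).
Proof. by rewrite /xs !HF /cyc_adj orbC. Qed.

Lemma xs_flag j : up (xs hk c (j %% k).+1) (xs hk c (j %% k)) = up (xs hk c j.+1) (xs hk c j).
Proof. by rewrite xs_succ xs_mod. Qed.
End X.

Lemma Cm_bal m (hm : 3 <= m) (hodd : odd m) (F : rel ('I_m * 'I_4)) :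
  is_Ck_factor (@blowup _ (@Cm m) 4) F m ->
  forall v, (exists w, F v w && up v w) /\ (exists w, F v w && up w v).
Proof.
case=> Hsub Hc v; have [c [Hinj Hcon HF]] := Hc v.
have hk : 0 < m by lia.
have : v \in codom c by rewrite -Hcon connect0.
case/codomP => i0 ->.
have Hstep j : up (xs hk c j) (xs hk c j.+1) || up (xs hk c j.+1) (xs hk c j).
  by rewrite -G_up; apply: Hsub; apply: xs_step.
have Hinv := qd_inv Hstep m.
have Exm : xs hk c m = xs hk c 0 by have := xs_add hk c 0; rewrite add0n.
rewrite Exm in Hinv.
have Hq : 2 * qd (xs hk c) m = m %[mod m].
  by apply/eqP; rewrite -(eqn_modDl (val (xs hk c 0).1)); apply/eqP.
have Hd : m %| qd (xs hk c) m.
  rewrite -(Gauss_dvdr _ (n:=2)); last by rewrite coprimen2.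
  by apply/eqP; rewrite Hq modnn.
have Hle := qd_le (xs hk c) m.
have [b Hall] : exists b, forall j, up (xs hk c j.+1) (xs hk c j) = b.
  case/dvdnP: Hd => t Ht.
  have [H0|Hm] : qd (xs hk c) m = 0 \/ qd (xs hk c) m = m.
    by move: Hle; rewrite Ht; case: t {Ht} => [|[|t]] /=; nia.
  - exists false => j; rewrite -xs_flag; apply: (qd_zero H0); exact: ltn_pmod.
  - exists true => j; rewrite -xs_flag; apply: (qd_full Hm); exact: ltn_pmod.
rewrite -(xs_ord hk c i0).
have F1 : F (xs hk c i0) (xs hk c i0.+1) by apply: xs_step.
have E2 : (i0 + m.-1).+1 = i0 + m by lia.
have F2 : F (xs hk c i0) (xs hk c (i0 + m.-1)).
  by rewrite xs_sym // -(xs_add hk c i0) -E2; apply: xs_step.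
have U1 := Hall i0; have U2 := Hall (i0 + m.-1); rewrite E2 xs_add in U2.
have S1 := Hstep i0; have S2 := Hstep (i0 + m.-1); rewrite E2 xs_add in S2.
case: b {Hall} U1 U2 => U1 U2.
- split; [exists (xs hk c (i0 + m.-1)) | exists (xs hk c i0.+1)]; by rewrite ?F1 ?F2 ?U1 ?U2.
- rewrite U1 orbF in S1; rewrite U2 orbF in S2.
  split; [exists (xs hk c i0.+1) | exists (xs hk c (i0 + m.-1))]; by rewrite ?F1 ?F2 ?S1 ?S2.
Qed.

Definition unbal m (F : rel ('I_m * 'I_4)) :=
  exists v a b, [/\ a != b, F v a, F v b & (up v a && up v b) || (up a v && up b v)].

Lemma unbal_at m (F : rel ('I_m * 'I_4)) (x : nat -> 'I_m * 'I_4) j :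
  (forall j, F (x j) (x j.+1)) -> (forall a b, F (x a) (x b) = F (x b) (x a)) ->
  (forall j, up (x j) (x j.+1) || up (x j.+1) (x j)) ->
  x j != x j.+2 -> up (x j.+1) (x j) != up (x j.+2) (x j.+1) -> unbal F.
Proof.
move=> Fs Fy Hs Hne Hf; exists (x j.+1), (x j), (x j.+2); split => //.
- by rewrite Fy.
- have S0 := Hs j; have S1 := Hs j.+1.
  move: Hf S0 S1; case: (up (x j.+1) (x j)); case: (up (x j.+2) (x j.+1)) => //= _ S0 S1;
  rewrite ?orbF in S0 S1; by rewrite ?S0 ?S1 ?orbT.
Qed.

Lemma C4_core m (hm : 3 <= m) (hodd : odd m) (F : rel ('I_m * 'I_4)) (x : nat -> 'I_m * 'I_4) :
  (forall j, F (x j) (x j.+1)) -> (forall a b, F (x a) (x b) = F (x b) (x a)) ->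
  (forall j, up (x j) (x j.+1) || up (x j.+1) (x j)) ->
  x 4 = x 0 -> x 0 != x 2 -> x 1 != x 3 -> x 2 != x 4 -> unbal F.
Proof.
move=> Fs Fy Hs E4 N0 N1 N2.
have Hinv := qd_inv Hs 4; rewrite E4 in Hinv.
have Q4 : qd x 4 = up (x 1) (x 0) + up (x 2) (x 1) + up (x 3) (x 2) + up (x 4) (x 3) by [].
have H4 : 2 * qd x 4 = 4 %[mod m].
  by apply/eqP; rewrite -(eqn_modDl (val (x 0).1)); apply/eqP.
have Hm4 : ~ (m %| 4).
  move=> H; have Hle : m <= 4 by apply: dvdn_leq H.
  have [E|E] : m = 3 \/ m = 4 by lia.
  - by rewrite E in H.
  - by rewrite E in hodd.
case: (eqVneq (up (x 1) (x 0)) (up (x 2) (x 1))) => [e1|]; last exact: unbal_at.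
case: (eqVneq (up (x 2) (x 1)) (up (x 3) (x 2))) => [e2|]; last exact: unbal_at.
case: (eqVneq (up (x 3) (x 2)) (up (x 4) (x 3))) => [e3|]; last exact: unbal_at.
rewrite Q4 -e3 -e2 -e1 in H4.
case: (up (x 1) (x 0)) H4 => /= H4; exfalso; apply: Hm4.
- move: H4; rewrite (_ : 2 * (1+1+1+1) = 4 + 4) // -[X in _ = X %[mod m]](add0n 4) => /eqP.
  by rewrite eqn_modDr mod0n.
- move: H4; rewrite (_ : 2 * (0+0+0+0) = 0) // mod0n => H4.
  by rewrite /dvdn -H4.
Qed.

Lemma C4_unbal m (hm : 3 <= m) (hodd : odd m) (F : rel ('I_m * 'I_4)) :
  is_Ck_factor (@blowup _ (@Cm m) 4) F 4 -> unbal F.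
Proof.
case=> Hsub Hc.
have hm0 : 0 < m by lia.
have [c [Hinj _ HF]] := Hc (Ordinal hm0, ord0).
have hk : 0 < 4 by [].
apply: (@C4_core m hm hodd F (xs hk c)).
- by move=> j; apply: (xs_step hk HF).
- by move=> a b; apply: (xs_sym hk HF).
- by move=> j; rewrite -G_up; apply: Hsub; apply: (xs_step hk HF).
- by have := xs_add hk c 0; rewrite add0n.
- by apply/eqP; rewrite /xs => /Hinj /(congr1 val) /eqP.
- by apply/eqP; rewrite /xs => /Hinj /(congr1 val) /eqP.
- by apply/eqP; rewrite /xs => /Hinj /(congr1 val) /eqP.
Qed.

Lemma up_fst1 m (v y z : 'I_m * 'I_4) : up v y -> up v z -> y.1 = z.1.
Proof. by move=> /eqP hy /eqP hz; apply: val_inj; rewrite hy hz. Qed.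

Lemma up_fst2 m (v y z : 'I_m * 'I_4) : up y v -> up z v -> y.1 = z.1.
Proof.
move=> /eqP hy /eqP hz; apply: val_inj; rewrite hy in hz.
have ly := ltn_ord y.1; have lz := ltn_ord z.1.
change (nat_of_ord y.1 = nat_of_ord z.1). rewrite -(modn_small ly) -(modn_small lz); apply/eqP.
by rewrite -(eqn_modDr 1) !addn1 hz.
Qed.

Lemma neq2 m (y z : 'I_m * 'I_4) : y.1 = z.1 -> y != z -> y.2 != z.2.
Proof. by case: y z => [y1 y2] [z1 z2] /= -> ; apply: contra => /eqP ->. Qed.

Lemma pig m (a b c d e : 'I_m * 'I_4) :
  b.1 = a.1 -> c.1 = a.1 -> d.1 = a.1 -> e.1 = a.1 ->
  a != b -> a != c -> a != d -> a != e -> b != c -> b != d -> b != e ->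
  c != d -> c != e -> d != e -> False.
Proof.
move=> eb ec ed ee ab ac ad ae bc bd be cd ce de.
have Hu : uniq [:: a.2; b.2; c.2; d.2; e.2].
  rewrite /= !inE !negb_or !neq2 //; congruence.
move/card_uniqP: Hu => Hc.
by have := max_card (mem [:: a.2; b.2; c.2; d.2; e.2]); rewrite Hc card_ord.
Qed.
Unset Implicit Arguments.

Theorem mainTheorem5 (m : nat) (hodd : odd m) (hm : 3 <= m) :
  ~ exists F0 F1 F2 F3 : rel ('I_m * 'I_4),
      [/\ is_Ck_factor (@blowup _ (@Cm m) 4) F0 4,
          is_Ck_factor (@blowup _ (@Cm m) 4) F1 m,
          is_Ck_factor (@blowup _ (@Cm m) 4) F2 m,
          is_Ck_factor (@blowup _ (@Cm m) 4) F3 m &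
          edge_partition4 (@blowup _ (@Cm m) 4) F0 F1 F2 F3].
Proof.
move=> [F0 [F1 [F2 [F3 [H0 H1 H2 H3 HP]]]]].
have [v [a [b [Nab Fa Fb Hu]]]] := C4_unbal hm hodd H0.
have S0 := H0.1; have S1 := H1.1; have S2 := H2.1.
have d01 y : F0 v y -> F1 v y -> False.
  by move=> h0 h1; have [_ [+ _]] := HP v y (S0 _ _ h0); rewrite h0 h1.
have d02 y : F0 v y -> F2 v y -> False.
  by move=> h0 h1; have [_ [_ [+ _]]] := HP v y (S0 _ _ h0); rewrite h0 h1.
have d03 y : F0 v y -> F3 v y -> False.
  by move=> h0 h1; have [_ [_ [_ [+ _]]]] := HP v y (S0 _ _ h0); rewrite h0 h1.
have d12 y : F1 v y -> F2 v y -> False.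
  by move=> h0 h1; have [_ [_ [_ [_ [+ _]]]]] := HP v y (S1 _ _ h0); rewrite h0 h1.
have d13 y : F1 v y -> F3 v y -> False.
  by move=> h0 h1; have [_ [_ [_ [_ [_ [+ _]]]]]] := HP v y (S1 _ _ h0); rewrite h0 h1.
have d23 y : F2 v y -> F3 v y -> False.
  by move=> h0 h1; have [_ [_ [_ [_ [_ [_ +]]]]]] := HP v y (S2 _ _ h0); rewrite h0 h1.
have ne (F F' : rel ('I_m * 'I_4)) y z : F v y -> F' v z -> (F v y -> F' v y -> False) -> y != z.
  by move=> hy hz H; apply/eqP => e; move: hz; rewrite -e; exact: H.
have [[w1 /andP [Fw1 Uw1]] [w1' /andP [Fw1' Uw1']]] := Cm_bal hm hodd H1 v.
have [[w2 /andP [Fw2 Uw2]] [w2' /andP [Fw2' Uw2']]] := Cm_bal hm hodd H2 v.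
have [[w3 /andP [Fw3 Uw3]] [w3' /andP [Fw3' Uw3']]] := Cm_bal hm hodd H3 v.
case/orP: Hu => /andP [Ua Ub].
- apply: (@pig m a b w1 w2 w3) => //; first by apply: (up_fst1 Ub Ua).
  + exact: (up_fst1 Uw1 Ua).
  + exact: (up_fst1 Uw2 Ua).
  + exact: (up_fst1 Uw3 Ua).
  + exact: (ne _ _ _ _ Fa Fw1 (@d01 a)).
  + exact: (ne _ _ _ _ Fa Fw2 (@d02 a)).
  + exact: (ne _ _ _ _ Fa Fw3 (@d03 a)).
  + exact: (ne _ _ _ _ Fb Fw1 (@d01 b)).
  + exact: (ne _ _ _ _ Fb Fw2 (@d02 b)).
  + exact: (ne _ _ _ _ Fb Fw3 (@d03 b)).
  + exact: (ne _ _ _ _ Fw1 Fw2 (@d12 w1)).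
  + exact: (ne _ _ _ _ Fw1 Fw3 (@d13 w1)).
  + exact: (ne _ _ _ _ Fw2 Fw3 (@d23 w2)).
- apply: (@pig m a b w1' w2' w3') => //; first by apply: (up_fst2 Ub Ua).
  + exact: (up_fst2 Uw1' Ua).
  + exact: (up_fst2 Uw2' Ua).
  + exact: (up_fst2 Uw3' Ua).
  + exact: (ne _ _ _ _ Fa Fw1' (@d01 a)).
  + exact: (ne _ _ _ _ Fa Fw2' (@d02 a)).
  + exact: (ne _ _ _ _ Fa Fw3' (@d03 a)).
  + exact: (ne _ _ _ _ Fb Fw1' (@d01 b)).
  + exact: (ne _ _ _ _ Fb Fw2' (@d02 b)).
  + exact: (ne _ _ _ _ Fb Fw3' (@d03 b)).
  + exact: (ne _ _ _ _ Fw1' Fw2' (@d12 w1')).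
  + exact: (ne _ _ _ _ Fw1' Fw3' (@d13 w1')).
  + exact: (ne _ _ _ _ Fw2' Fw3' (@d23 w2')).
Qed.
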